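(* For plane binary tree shapes $t$ let $S_t$, $T$ be as in the context. Then \[ \sum_{\substack{t \in \mathcal{B}_{\le n}\\ |t| \ge \log_4 n}} \left(1 - \frac{[z^n]S_t(z)}{[z^n]T(z)}\right) = \Omega\!\left(\sqrt{n}\right) \quad \text{as } n\to\infty . \]
   Context: A plane binary tree is a rooted tree in which each node has a left and a right slot, each empty or holding a subtree; $\mathcal{B}_{\le n}$ is the set of (unlabeled) plane binary trees with at most $n$ nodes, and $|t|$ is the number of nodes. A plane increasing binary tree of size $n$ is a plane binary tree whose $n$ nodes are labeled $1,\dots,n$ increasingly along every path from the root; their exponential generating function is $T(z)=z/(1-z)$, so $[z^n]T(z)=1$. A fringe subtree is a node with all its descendants; its shape is obtained by forgetting labels. For a shape $t$ with $k$ nodes, $\ell(t)$ is its number of increasing labelings (equal to $k!$ divided by the product of the sizes of all fringe subtrees of $t$) and $w(t)=\ell(t)/k!$. $S_t(z)$ is the exponential generating function of plane increasing binary trees having no fringe subtree of shape $t$; it is the power series solution of $S_t'(z)=(1+S_t(z))^2-w(t)kz^{k-1}$, $S_t(0)=0$. *)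

(* Defs.v *)
From Stdlib Require Import Reals Lra Lia Arith List.
Import ListNotations.
Open Scope R_scope.

(* Plane binary trees: [E] is an empty slot, [N l r] a node with left and
   right slots.  A (nonempty) plane binary tree shape is a term [N l r]. *)
Inductive bt : Type := E : bt | N : bt -> bt -> bt.

Fixpoint bsize (t : bt) : nat :=
  match t with E => 0%nat | N l r => S (bsize l + bsize r) end.

(* trees_by_size n = [B_0; B_1; ...; B_n], B_k = list of all trees with k nodes *)
Fixpoint trees_by_size (n : nat) : list (list bt) :=
  match n with
  | O => [[E]]
  | S m =>
      let L := trees_by_size m in
      L ++ [flat_map (fun k =>
               flat_map (fun l => map (fun r => N l r) (nth (m - k) L []))
                        (nth k L []))
             (seq 0 (S m))]
  end.

Definition B_le (n : nat) : list bt :=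
  flat_map (fun k => nth k (trees_by_size n) []) (seq 1 n).

Fixpoint hookprod (t : bt) : nat :=
  match t with E => 1%nat | N l r => (bsize t * hookprod l * hookprod r)%nat end.

(* number of increasing labelings: k! / prod of fringe subtree sizes *)
Definition ell (t : bt) : nat := Nat.div (fact (bsize t)) (hookprod t).

Definition wt (t : bt) : R := INR (ell t) / INR (fact (bsize t)).

Fixpoint sumR (l : list R) : R :=
  match l with [] => 0 | x :: l' => x + sumR l' end.

(* Coefficients [s_0; ...; s_m] of the power series solution S of
   S'(z) = (1 + S(z))^2 - w k z^(k-1),  S(0) = 0,
   i.e. s_0 = 0 and (j+1) s_(j+1) = [z^j](1+S)^2 - [j = k-1] w k. *)
Fixpoint Scoefs (k : nat) (w : R) (m : nat) : list R :=
  match m with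
  | O => [0]
  | S j =>
      let L := Scoefs k w j in
      let c := fun i : nat => (if Nat.eqb i 0 then 1 else 0) + nth i L 0 in
      let sq := sumR (map (fun i => c i * c (j - i)%nat) (seq 0 (S j))) in
      let corr := if Nat.eqb j (k - 1) then w * INR k else 0 in
      L ++ [(sq - corr) / INR (S j)]
  end.

Definition coef_S (t : bt) (n : nat) : R :=
  nth n (Scoefs (bsize t) (wt t) n) 0.

(* [z^n] T(z), T(z) = z/(1-z) *)
Definition coef_T (n : nat) : R := if Nat.eqb n 0 then 0 else 1.

Definition log4 (x : R) : R := ln x / ln 4.

Definition the_sum (n : nat) : R :=
  sumR (map (fun t => 1 - coef_S t n / coef_T n)
            (filter (fun t => if Rle_dec (log4 (INR n)) (INR (bsize t)) then true else false)
                    (B_le n))).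

(* Main.v *)
Require Import Defs.
From Stdlib Require Import Reals Lra Lia Arith List.
Require Import Defs.
Import ListNotations.
Open Scope R_scope.


Fixpoint sm (f : nat -> R) (n : nat) : R :=
  match n with O => 0 | S m => sm f m + f m end.

Lemma sumR_app l1 l2 : sumR (l1 ++ l2) = sumR l1 + sumR l2.
Proof. induction l1; simpl; [lra| rewrite IHl1; lra]. Qed.

Lemma sumR_map_seq (f : nat -> R) n : sumR (map f (seq 0 n)) = sm f n.
Proof.
  induction n; [reflexivity|].
  rewrite seq_S, map_app, sumR_app, IHn; simpl; lra.
Qed.

Lemma sm_ext f g n : (forall i, (i < n)%nat -> f i = g i) -> sm f n = sm g n.
Proof. induction n; intros H; simpl; [lra|]. rewrite IHn, H; auto; lra. Qed.

Lemma sm_le f g n : (forall i, (i < n)%nat -> f i <= g i) -> sm f n <= sm g n.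
Proof. induction n; intros H; simpl; [lra|].
  assert (sm f n <= sm g n) by (apply IHn; auto). specialize (H n ltac:(lia)). lra. Qed.

Lemma sm_const c n : sm (fun _ => c) n = INR n * c.
Proof. induction n; simpl sm; [simpl; lra|]. rewrite IHn, S_INR; lra. Qed.

Lemma sm_scal c f n : sm (fun i => c * f i) n = c * sm f n.
Proof. induction n; simpl; [lra|]. rewrite IHn; lra. Qed.

Lemma sm_shift f n : sm f (S n) = f 0%nat + sm (fun i => f (S i)) n.
Proof. induction n; simpl in *; [lra|]. rewrite IHn; lra. Qed.

Lemma sm_refl f j : sm (fun i => f (j - i)%nat) (S j) = sm f (S j).
Proof.
  induction j.
  - simpl; lra.
  - rewrite sm_shift. rewrite Nat.sub_0_r.
    rewrite (sm_ext (fun i => f (S j - S i)%nat) (fun i => f (j - i)%nat)) by (intros; f_equal).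
    rewrite IHj. change (sm f (S (S j))) with (sm f (S j) + f (S j)). lra.
Qed.

Lemma sm_expand x y n :
  sm (fun i => (1 - x i) * (1 - y i)) n = INR n - sm x n - sm y n + sm (fun i => x i * y i) n.
Proof. induction n; simpl sm; [simpl; lra|]. rewrite IHn, S_INR; ring. Qed.

Lemma sm_nonneg f n : (forall i, (i < n)%nat -> 0 <= f i) -> 0 <= sm f n.
Proof. intros H. replace 0 with (sm (fun _ => 0) n) at 1 by (rewrite sm_const; ring). apply sm_le. auto. Qed.

Lemma Scoefs_len k w m : length (Scoefs k w m) = S m.
Proof. induction m; simpl; [reflexivity|]. rewrite length_app, IHm; simpl; lia. Qed.

Definition sc k w i := nth i (Scoefs k w i) 0.

Lemma Scoefs_prefix k w m i : (i <= m)%nat -> nth i (Scoefs k w m) 0 = sc k w i.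
Proof.
  induction m; intros Hi.
  - assert (i = 0%nat) by lia; subst; reflexivity.
  - destruct (Nat.eq_dec i (S m)); [subst; reflexivity|].
    cbn [Scoefs]. rewrite app_nth1 by (rewrite Scoefs_len; lia). apply IHm; lia.
Qed.

Definition corr k w j := if Nat.eqb j (k - 1) then w * INR k else 0.

Lemma sc_rec k w j :
  INR (S j) * sc k w (S j) =
  sm (fun i => ((if Nat.eqb i 0 then 1 else 0) + sc k w i) *
               ((if Nat.eqb (j - i) 0 then 1 else 0) + sc k w (j - i))) (S j) - corr k w j.
Proof.
  unfold sc at 1. cbn [Scoefs]. rewrite app_nth2 by (rewrite Scoefs_len; lia).
  rewrite Scoefs_len, Nat.sub_diag. cbn [nth].
  rewrite <- sumR_map_seq.
  erewrite map_ext_in.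
  2:{ intros i Hi. apply in_seq in Hi.
      rewrite !Scoefs_prefix by lia. reflexivity. }
  unfold corr. field. apply not_0_INR. lia.
Qed.

Lemma sc0 k w : sc k w 0 = 0.
Proof. reflexivity. Qed.

Definition A (d : nat -> R) j := sm d (S j).
Definition Q (d : nat -> R) j := sm (fun i => d i * d (j - i)%nat) (S j).

Definition good (k : nat) (w : R) (d : nat -> R) :=
  d 0%nat = 0 /\
  forall j, INR (S j) * (1 - d (S j)) =
    sm (fun i => (1 - d i) * (1 - d (j - i)%nat)) (S j) - corr k w j.

Lemma good_HA k w d : good k w d -> forall j,
  INR (S j) * d (S j) = 2 * A d j - Q d j + corr k w j.
Proof.
  intros [H0 H] j. specialize (H j). rewrite sm_expand in H.
  rewrite (sm_refl d j) in H. unfold A, Q. lra.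
Qed.

Lemma A_S d j : A d (S j) = A d j + d (S j).
Proof. reflexivity. Qed.

Lemma zero_below k w d : good k w d -> forall i, (i < k)%nat -> d i = 0.
Proof.
  intros G. pose proof (good_HA _ _ _ G) as HA. destruct G as [H0 _].
  induction i as [i IH] using lt_wf_ind. intros Hi.
  destruct i; [exact H0|].
  specialize (HA i).
  assert (EA : A d i = 0).
  { unfold A. replace 0 with (sm (fun _ => 0) (S i)) by (rewrite sm_const; ring).
    apply sm_ext. intros; apply IH; lia. }
  assert (EQ : Q d i = 0).
  { unfold Q. replace 0 with (sm (fun _ => 0) (S i)) by (rewrite sm_const; ring).
    apply sm_ext. intros. rewrite IH by lia. ring. }
  unfold corr in HA. replace (Nat.eqb i (k-1)) with false in HA by (symmetry; apply Nat.eqb_neq; lia).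
  rewrite EA, EQ in HA. assert (INR (S i) <> 0) by (apply not_0_INR; lia).
  apply Rmult_eq_reg_l with (INR (S i)); auto. lra.
Qed.

Lemma Ak_eq k w d : good k w d -> (1 <= k)%nat -> A d (k - 1) = 0 /\ Q d (k-1) = 0.
Proof.
  intros G Hk. split.
  - unfold A. replace 0 with (sm (fun _ => 0) (S (k-1))) by (rewrite sm_const; ring).
    apply sm_ext. intros; apply (zero_below k w d G); lia.
  - unfold Q. replace 0 with (sm (fun _ => 0) (S (k-1))) by (rewrite sm_const; ring).
    apply sm_ext. intros. rewrite (zero_below k w d G i) by lia. ring.
Qed.

Lemma dk k w d : good k w d -> (1 <= k)%nat -> d k = w.
Proof.
  intros G Hk. pose proof (good_HA _ _ _ G (k-1)) as HA.
  destruct (Ak_eq k w d G Hk) as [E1 E2].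
  replace (S (k-1)) with k in HA by lia. unfold corr in HA. rewrite Nat.eqb_refl in HA.
  rewrite E1, E2 in HA. assert (INR k <> 0) by (apply not_0_INR; lia).
  apply Rmult_eq_reg_l with (INR k); auto. lra.
Qed.

Lemma Ak k w d : good k w d -> (1 <= k)%nat -> A d k = w.
Proof.
  intros G Hk. replace k with (S (k-1)) at 1 by lia. rewrite A_S.
  replace (S (k-1)) with k by lia. rewrite (dk k w d G Hk).
  rewrite (proj1 (Ak_eq k w d G Hk)). ring.
Qed.

Lemma d_bounds k w d : good k w d -> (1 <= k)%nat -> 0 <= w <= 1 ->
  forall i, 0 <= d i <= 1.
Proof.
  intros G Hk Hw. pose proof (good_HA _ _ _ G) as HA. pose proof G as [H0 H].
  induction i as [i IH] using lt_wf_ind.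
  destruct i; [rewrite H0; lra|].
  assert (Sp : 0 < INR (S i)) by (apply lt_0_INR; lia).
  split.
  - specialize (HA i).
    assert (QA : Q d i <= A d i).
    { unfold Q, A. apply sm_le. intros j Hj.
      destruct (IH j ltac:(lia)). destruct (IH (i - j)%nat ltac:(lia)). nra. }
    assert (A0 : 0 <= A d i) by (apply sm_nonneg; intros; apply IH; lia).
    assert (C0 : 0 <= corr k w i) by (unfold corr; destruct Nat.eqb; [apply Rmult_le_pos; [lra| apply pos_INR]|lra]).
    assert (0 <= INR (S i) * d (S i)) by lra. nra.
  - specialize (H i).
    assert (0 <= INR (S i) * (1 - d (S i))).
    { rewrite H. unfold corr. destruct (Nat.eqb i (k-1)) eqn:E.
      + apply Nat.eqb_eq in E.
        rewrite (sm_ext _ (fun _ => 1)).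
        2:{ intros j Hj. rewrite !(zero_below k w d G) by lia. ring. }
        rewrite sm_const. replace (S i) with k by lia. pose proof (pos_INR k). nra.
      + rewrite Rminus_0_r. apply sm_nonneg. intros j Hj.
        destruct (IH j ltac:(lia)). destruct (IH (i - j)%nat ltac:(lia)). nra. }
    nra.
Qed.

Lemma d_le_A d j i : (forall i, 0 <= d i) -> (i <= j)%nat -> d i <= A d j.
Proof.
  intros Hd Hi. unfold A. induction j.
  - assert (i = 0%nat) by lia. subst. simpl. lra.
  - change (sm d (S (S j))) with (sm d (S j) + d (S j)).
    destruct (Nat.eq_dec i (S j)).
    + subst. assert (0 <= sm d (S j)) by (apply sm_nonneg; auto). lra.
    + specialize (IHj ltac:(lia)). specialize (Hd (S j)). lra.
Qed.

Lemma Q_le_A2 d j : (forall i, 0 <= d i) -> Q d j <= A d j * A d j.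
Proof.
  intros Hd. unfold Q. replace (A d j * A d j) with (sm (fun i => d i * A d j) (S j)).
  2:{ rewrite (sm_ext _ (fun i => A d j * d i)) by (intros; ring). rewrite sm_scal. reflexivity. }
  apply sm_le. intros i Hi. apply Rmult_le_compat_l; auto. apply d_le_A; auto; lia.
Qed.

Lemma main_bounds k w d : good k w d -> (1 <= k)%nat -> 0 <= w <= 1 ->
  forall m, let x := INR (k + m) in let u := w / ((INR k + 1) * (INR k + 2)) in
  A d (k + m) <= u * (x + 1) * (x + 2) /\
  (x + 1) * (x + 2) * (u - u * u * INR m * (x + 1)) <= A d (k + m).
Proof.
  intros G Hk Hw. pose proof (good_HA _ _ _ G) as HA.
  pose proof (d_bounds k w d G Hk Hw) as Hd.
  assert (Hd0 : forall i, 0 <= d i) by (intros; apply Hd).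
  assert (Kp : 0 < (INR k + 1) * (INR k + 2)) by (pose proof (pos_INR k); nra).
  induction m; intros x u.
  - unfold x, u. rewrite Nat.add_0_r. rewrite (Ak k w d G Hk).
    change (INR 0) with 0. pose proof (pos_INR k). split; right; field; lra.
  - destruct IHm as [U L].
    set (x0 := INR (k + m)) in *. set (u0 := w / ((INR k + 1) * (INR k + 2))) in *.
    assert (Ex : x = x0 + 1) by (unfold x, x0; rewrite Nat.add_succ_r, S_INR; ring).
    assert (Em : INR (S m) = INR m + 1) by apply S_INR.
    assert (u = u0) by reflexivity. subst u. rewrite Ex, Em. clear Ex Em.
    assert (u0p : 0 <= u0) by (unfold u0, Rdiv; apply Rmult_le_pos; [lra| left; apply Rinv_0_lt_compat; lra]).
    assert (x0p : 0 <= x0) by apply pos_INR.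
    assert (mp : 0 <= INR m) by apply pos_INR.
    specialize (HA (k + m)%nat).
    rewrite Nat.add_succ_r, A_S.
    unfold corr in HA. replace (Nat.eqb (k+m) (k-1)) with false in HA by (symmetry; apply Nat.eqb_neq; lia).
    fold x0 in HA. rewrite S_INR in HA. fold x0 in HA.
    pose proof (Q_le_A2 d (k+m) Hd0) as QA.
    assert (Q0 : 0 <= Q d (k+m)) by (unfold Q; apply sm_nonneg; intros; apply Rmult_le_pos; auto).
    assert (A0 : 0 <= A d (k+m)) by (unfold A; apply sm_nonneg; intros; auto).
    set (a := A d (k+m)) in *. set (q := Q d (k+m)) in *. set (e := d (S (k+m))) in *.
    assert (He : e = (2 * a - q) / (x0 + 1)) by (field_simplify_eq; lra).
    split.
    + rewrite He. apply Rmult_le_reg_l with (x0 + 1); [lra|].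
      field_simplify; [|lra].
      assert ((x0+1)*a + 2*a - q <= u0 * (x0+1+1)*(x0+1+2)*(x0+1)) by nra. lra.
    + assert (a * a <= (u0 * (x0 + 1) * (x0 + 2)) * (u0 * (x0 + 1) * (x0 + 2))) by nra.
      rewrite He. apply Rmult_le_reg_l with (x0 + 1); [lra|].
      field_simplify; [|lra].
      assert (Hk2 : (x0+1+1)*(x0+1+2)*(u0 - u0*u0*(INR m+1)*(x0+1+1))*(x0+1)
                  <= (x0+3)*((x0+1)*(x0+2)*(u0 - u0*u0*INR m*(x0+1)))
                     - (u0*(x0+1)*(x0+2))*(u0*(x0+1)*(x0+2))).
      { assert (0 <= u0*u0*(x0+1)*(x0+2)*((x0+3)*(INR m + x0 + 2) - (x0+1)*(x0+2))).
        { assert (0 <= x0 * INR m) by (apply Rmult_le_pos; lra). apply Rmult_le_pos; [|nra]. assert (0 <= u0*u0) by (apply Rmult_le_pos; lra). assert (0 <= u0*u0*(x0+1)) by (apply Rmult_le_pos; lra). apply Rmult_le_pos; lra. }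
        nra. }
      nra.
Qed.

Lemma d_lower k w d : good k w d -> (1 <= k)%nat -> 0 <= w <= 1 ->
  forall n, (k < n)%nat ->
  let u := w / ((INR k + 1) * (INR k + 2)) in
  2 * (INR n + 1) * u - 3 * (u * u) * (INR n + 1) ^ 3 <= d n.
Proof.
  intros G Hk Hw n Hn u.
  pose proof (good_HA _ _ _ G) as HA.
  pose proof (d_bounds k w d G Hk Hw) as Hd.
  assert (Hd0 : forall i, 0 <= d i) by (intros; apply Hd).
  assert (Kp : 0 < (INR k + 1) * (INR k + 2)) by (pose proof (pos_INR k); nra).
  destruct n as [|j]; [lia|].
  destruct (main_bounds k w d G Hk Hw (j - k)) as [U L].
  replace (k + (j - k))%nat with j in U, L by lia.
  fold u in U, L.
  specialize (HA j). unfold corr in HA.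
  replace (Nat.eqb j (k-1)) with false in HA by (symmetry; apply Nat.eqb_neq; lia).
  pose proof (Q_le_A2 d j Hd0) as QA.
  assert (A0 : 0 <= A d j) by (unfold A; apply sm_nonneg; intros; auto).
  assert (u0p : 0 <= u) by (unfold u, Rdiv; apply Rmult_le_pos; [lra| left; apply Rinv_0_lt_compat; lra]).
  rewrite S_INR in *.
  set (x := INR j) in *. set (mm := INR (j - k)) in *.
  assert (mx : mm <= x) by (unfold mm, x; apply le_INR; lia).
  assert (m0 : 0 <= mm) by apply pos_INR.
  assert (x0 : 0 <= x) by apply pos_INR.
  set (a := A d j) in *. set (q := Q d j) in *. set (e := d (S j)) in *.
  assert (a * a <= (u * (x + 1) * (x + 2)) * (u * (x + 1) * (x + 2))) by nra.
  assert (He : (x+1) * e >= 2 * ((x + 1) * (x + 2) * (u - u * u * mm * (x + 1)))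
                          - (u * (x + 1) * (x + 2)) * (u * (x + 1) * (x + 2))) by lra.
  apply Rmult_le_reg_l with (x + 1); [lra|].
  assert (0 <= u*u*(x+1)*(x+2)*(3*(x+2)^2 - 2*mm*(x+1) - (x+1)*(x+2))).
  { assert (0 <= u*u) by (apply Rmult_le_pos; lra).
    assert (0 <= u*u*(x+1)) by (apply Rmult_le_pos; lra).
    assert (0 <= u*u*(x+1)*(x+2)) by (apply Rmult_le_pos; lra).
    apply Rmult_le_pos; [lra|]. nra. }
  nra.
Qed.

Lemma flat_map_ext_in {A B : Type} (f g : A -> list B) l :
  (forall a, In a l -> f a = g a) -> flat_map f l = flat_map g l.
Proof. induction l; simpl; intros H; [reflexivity|]. rewrite H, IHl; auto. Qed.

Lemma tbs_len m : length (trees_by_size m) = S m.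
Proof. induction m; simpl; [reflexivity|]. rewrite length_app, IHm; simpl; lia. Qed.

Definition Bk k := nth k (trees_by_size k) [].

Lemma tbs_prefix m k : (k <= m)%nat -> nth k (trees_by_size m) [] = Bk k.
Proof.
  induction m; intros Hi.
  - assert (k = 0%nat) by lia; subst; reflexivity.
  - destruct (Nat.eq_dec k (S m)); [subst; reflexivity|].
    cbn [trees_by_size]. rewrite app_nth1 by (rewrite tbs_len; lia). apply IHm; lia.
Qed.

Lemma Bk_S m : Bk (S m) =
  flat_map (fun k' => flat_map (fun l => map (fun r => N l r) (Bk (m - k')))
                        (Bk k')) (seq 0 (S m)).
Proof.
  unfold Bk at 1. cbn [trees_by_size]. rewrite app_nth2 by (rewrite tbs_len; lia).
  rewrite tbs_len, Nat.sub_diag. cbn [nth].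
  apply flat_map_ext_in. intros k' Hk'. apply in_seq in Hk'.
  rewrite (tbs_prefix m k') by lia. rewrite (tbs_prefix m (m - k')) by lia. reflexivity.
Qed.

Lemma Bk_size k t : In t (Bk k) -> bsize t = k.
Proof.
  revert t. induction k as [k IH] using lt_wf_ind. intros t Ht.
  destruct k.
  - unfold Bk in Ht. simpl in Ht. destruct Ht as [<-|[]]. reflexivity.
  - rewrite Bk_S in Ht. apply in_flat_map in Ht as [k' [Hk' Ht]].
    apply in_seq in Hk'. apply in_flat_map in Ht as [l [Hl Ht]].
    apply in_map_iff in Ht as [r [<- Hr]].
    simpl. rewrite (IH k' ltac:(lia) l Hl), (IH (k - k')%nat ltac:(lia) r Hr). lia.
Qed.

Lemma fact_div a b : Nat.divide (fact a * fact b) (fact (a + b)).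
Proof.
  remember (a + b)%nat as n eqn:En. revert a b En.
  induction n; intros a b En.
  - assert (a = 0%nat) by lia. assert (b = 0%nat) by lia. subst. exists 1%nat. reflexivity.
  - destruct a as [|a]. { change (fact 0) with 1%nat. rewrite Nat.mul_1_l, En, Nat.add_0_l. apply Nat.divide_refl. }
    destruct b as [|b]. { change (fact 0) with 1%nat. rewrite Nat.mul_1_r, En, Nat.add_0_r. apply Nat.divide_refl. }
    assert (E : fact (S n) = (S a * fact n + S b * fact n)%nat).
    { change (fact (S n)) with (S n * fact n)%nat. replace (S n) with (S a + S b)%nat at 1 by lia. ring. }
    rewrite E. apply Nat.divide_add_r.
    + destruct (IHn a (S b) ltac:(lia)) as [q Hq].
      exists q. change (fact (S a)) with (S a * fact a)%nat. rewrite Hq. ring.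
    + destruct (IHn (S a) b ltac:(lia)) as [q Hq].
      exists q. change (fact (S b)) with (S b * fact b)%nat. rewrite Hq. ring.
Qed.

Lemma hp_div t : Nat.divide (hookprod t) (fact (bsize t)).
Proof.
  induction t as [|l IHl r IHr]; cbn [hookprod bsize].
  - exists 1%nat. reflexivity.
  - change (fact (S (bsize l + bsize r))) with (S (bsize l + bsize r) * fact (bsize l + bsize r))%nat.
    rewrite <- Nat.mul_assoc. apply Nat.mul_divide_mono_l.
    eapply Nat.divide_trans; [|apply fact_div].
    eapply Nat.divide_trans; [apply Nat.mul_divide_mono_r; exact IHl|].
    apply Nat.mul_divide_mono_l; exact IHr.
Qed.

Lemma hp_pos t : (0 < hookprod t)%nat.
Proof. induction t; cbn [hookprod bsize]; [lia|]. apply Nat.mul_pos_pos; [apply Nat.mul_pos_pos|]; lia. Qed.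

Lemma wt_eq t : wt t = / INR (hookprod t).
Proof.
  unfold wt, ell. destruct (hp_div t) as [q Hq].
  rewrite Hq. rewrite Nat.div_mul by (pose proof (hp_pos t); lia).
  rewrite mult_INR. pose proof (hp_pos t). pose proof (fact_neq_0 (bsize t)).
  assert (q <> 0%nat) by (intro; subst; lia).
  assert (INR q <> 0) by (apply not_0_INR; auto).
  assert (INR (hookprod t) <> 0) by (apply not_0_INR; lia).
  field; auto.
Qed.

Lemma wt_pos t : 0 < wt t <= 1.
Proof.
  rewrite wt_eq. pose proof (hp_pos t).
  assert (1 <= INR (hookprod t)) by (apply (le_INR 1); lia).
  split; [apply Rinv_0_lt_compat; lra|].
  rewrite <- Rinv_1. apply Rinv_le_contravar; lra.
Qed.

Lemma hp_bound t : (3/2) ^ (bsize t) <= 3/2 * INR (hookprod t).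
Proof.
  induction t as [|l IHl r IHr].
  - simpl. lra.
  - cbn [bsize hookprod]. rewrite !mult_INR.
    pose proof (hp_pos l). pose proof (hp_pos r).
    assert (H1 : 1 <= INR (hookprod l)) by (apply (le_INR 1); lia).
    assert (H2 : 1 <= INR (hookprod r)) by (apply (le_INR 1); lia).
    rewrite S_INR, plus_INR. rewrite <- tech_pow_Rmult, pow_add.
    revert IHl IHr H1 H2.
    generalize (INR (hookprod l)) (INR (hookprod r)). intros hl hr IHl IHr H1 H2.
    destruct (bsize l) as [|a]; destruct (bsize r) as [|b].
    + simpl in *. nra.
    + assert (Hb : 0 < (3/2) ^ S b) by (apply pow_lt; lra).
      revert IHr Hb. generalize ((3/2) ^ S b). intros q IHr Hq.
      rewrite S_INR in *. change (INR 0) with 0 in *. simpl pow in *. pose proof (pos_INR b).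
      assert (hl * hr >= hr) by nra. nra.
    + assert (Ha : 0 < (3/2) ^ S a) by (apply pow_lt; lra).
      revert IHl Ha. generalize ((3/2) ^ S a). intros p IHl Hp.
      rewrite S_INR in *. change (INR 0) with 0 in *. simpl pow in *. pose proof (pos_INR a).
      assert (hl * hr >= hl) by nra. nra.
    + assert (Ha : 0 < (3/2) ^ S a) by (apply pow_lt; lra).
      assert (Hb : 0 < (3/2) ^ S b) by (apply pow_lt; lra).
      revert IHl IHr Ha Hb. generalize ((3/2) ^ S a) ((3/2) ^ S b). intros p q IHl IHr Hp Hq.
      rewrite !S_INR in *. pose proof (pos_INR a). pose proof (pos_INR b).
      assert (p * q <= 3/2 * hl * q) by (apply Rmult_le_compat_r; lra).
      assert (3/2 * hl * q <= 3/2 * hl * (3/2 * hr)) by (apply Rmult_le_compat_l; lra).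
      assert (0 <= hl * hr) by nra. nra.
Qed.

Lemma sumR_map_app {A} (f : A -> R) l1 l2 : sumR (map f (l1 ++ l2)) = sumR (map f l1) + sumR (map f l2).
Proof. rewrite map_app, sumR_app; reflexivity. Qed.

Lemma sumR_flat_map {A B} (f : B -> R) (g : A -> list B) l :
  sumR (map f (flat_map g l)) = sumR (map (fun x => sumR (map f (g x))) l).
Proof. induction l; simpl; [reflexivity|]. rewrite sumR_map_app, IHl. reflexivity. Qed.

Lemma sumR_ext_in {A} (f g : A -> R) l : (forall x, In x l -> f x = g x) ->
  sumR (map f l) = sumR (map g l).
Proof. induction l; simpl; intros H; [reflexivity|]. rewrite H, IHl; auto. Qed.

Lemma sumR_le_in {A} (f g : A -> R) l : (forall x, In x l -> f x <= g x) ->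
  sumR (map f l) <= sumR (map g l).
Proof. induction l; simpl; intros H; [lra|].
  assert (f a <= g a) by auto. assert (sumR (map f l) <= sumR (map g l)) by auto. lra. Qed.

Lemma sumR_scal {A} (c : R) (f : A -> R) l : sumR (map (fun x => c * f x) l) = c * sumR (map f l).
Proof. induction l; simpl; [ring|]. rewrite IHl; ring. Qed.

Lemma sumR_map_map {A B} (f : B -> R) (g : A -> B) l : sumR (map f (map g l)) = sumR (map (fun x => f (g x)) l).
Proof. rewrite map_map. reflexivity. Qed.

Lemma wt_N l r : wt (N l r) = wt l * wt r / INR (S (bsize l + bsize r)).
Proof.
  rewrite !wt_eq. cbn [hookprod bsize]. rewrite !mult_INR.
  pose proof (hp_pos l). pose proof (hp_pos r).
  assert (INR (hookprod l) <> 0) by (apply not_0_INR; lia).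
  assert (INR (hookprod r) <> 0) by (apply not_0_INR; lia).
  assert (INR (S (bsize l + bsize r)) <> 0) by (apply not_0_INR; lia).
  field; auto.
Qed.

Lemma W_one k : sumR (map wt (Bk k)) = 1.
Proof.
  induction k as [k IH] using lt_wf_ind.
  destruct k as [|m].
  - unfold Bk. simpl. rewrite wt_eq. simpl. lra.
  - rewrite Bk_S, sumR_flat_map.
    assert (Sm : INR (S m) <> 0) by (apply not_0_INR; lia).
    rewrite (sumR_ext_in _ (fun _ => / INR (S m))).
    + rewrite sumR_map_seq, sm_const. field; auto.
    + intros k' Hk'. apply in_seq in Hk'.
      rewrite sumR_flat_map.
      rewrite (sumR_ext_in _ (fun l => / INR (S m) * wt l)).
      * rewrite sumR_scal, IH by lia. ring.
      * intros l Hl. rewrite sumR_map_map.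
        rewrite (sumR_ext_in _ (fun r => (wt l / INR (S m)) * wt r)).
        -- rewrite sumR_scal, IH by lia. field; auto.
        -- intros r Hr. rewrite wt_N. rewrite (Bk_size _ _ Hl), (Bk_size _ _ Hr).
           replace (k' + (m - k'))%nat with m by lia. field; auto.
Qed.

Definition dd k w i := (if Nat.eqb i 0 then 0 else 1) - sc k w i.

Lemma good_dd k w : good k w (dd k w).
Proof.
  split; [unfold dd; simpl; rewrite sc0; ring|].
  intros j. change (1 - dd k w (S j)) with (1 - (1 - sc k w (S j))).
  replace (1 - (1 - sc k w (S j))) with (sc k w (S j)) by ring.
  rewrite sc_rec. f_equal. apply sm_ext. intros i _. unfold dd.
  destruct (Nat.eqb i 0); destruct (Nat.eqb (j - i) 0); ring.
Qed.

Lemma pow_bound m : 9/2 * (INR m + 102) ^ 8 <= (3/2) ^ (100 + m).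
Proof.
  induction m.
  - change (INR 0) with 0. rewrite Nat.add_0_r. lra.
  - rewrite Nat.add_succ_r, S_INR.
    change ((3/2)^S (100+m)) with (3/2 * (3/2)^(100+m)).
    set (y := INR m + 102) in *.
    assert (y0 : 102 <= y) by (unfold y; pose proof (pos_INR m); lra).
    assert (H1 : (y + 1) ^ 2 <= 11/10 * y ^ 2) by nra.
    assert (H2 : ((y + 1) ^ 2) ^ 4 <= (11/10 * y ^ 2) ^ 4).
    { apply pow_incr. split; [apply pow_le; lra| exact H1]. }
    rewrite <- pow_mult in H2. rewrite Rpow_mult_distr, <- pow_mult in H2. simpl (2*4)%nat in H2.
    replace (INR m + 1 + 102) with (y + 1) by (unfold y; ring).
    assert (0 <= y ^ 8) by (apply pow_le; lra).
    replace ((11/10)^4) with (14641/10000) in H2 by (simpl; field).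
    lra.
Qed.

Lemma filter_flat_map {A B} (p : B -> bool) (g : A -> list B) l :
  filter p (flat_map g l) = flat_map (fun x => filter p (g x)) l.
Proof. induction l; simpl; [reflexivity|]. rewrite filter_app, IHl. reflexivity. Qed.

Lemma filter_all {A} (p : A -> bool) l : (forall x, In x l -> p x = true) -> filter p l = l.
Proof. induction l; simpl; intros H; [reflexivity|]. rewrite H, IHl; auto. Qed.

Lemma sumR_nonneg_in {A} (f : A -> R) l : (forall x, In x l -> 0 <= f x) -> 0 <= sumR (map f l).
Proof. induction l; simpl; intros H; [lra|]. assert (0 <= f a) by auto. assert (0 <= sumR (map f l)) by auto. lra. Qed.

Lemma sumR_ge_term {A} (f : A -> R) l x : In x l -> (forall y, In y l -> 0 <= f y) -> f x <= sumR (map f l).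
Proof.
  induction l; simpl; intros Hx H; [contradiction|].
  destruct Hx as [<-|Hx].
  - assert (0 <= sumR (map f l)) by (apply sumR_nonneg_in; auto). lra.
  - assert (0 <= f a) by auto. assert (f x <= sumR (map f l)) by auto. lra.
Qed.

Lemma term_eq t n : (1 <= n)%nat -> 1 - coef_S t n / coef_T n = dd (bsize t) (wt t) n.
Proof.
  intros Hn. unfold coef_T, dd, coef_S.
  replace (Nat.eqb n 0) with false by (symmetry; apply Nat.eqb_neq; lia).
  unfold sc. field.
Qed.

Lemma dd_nonneg t n : (1 <= bsize t)%nat -> 0 <= dd (bsize t) (wt t) n.
Proof.
  intros H. pose proof (wt_pos t).
  apply (d_bounds (bsize t) (wt t) _ (good_dd _ _) H); lra.
Qed.

Lemma final_arith X K P : 100 <= K -> (K+1)^4 <= X -> X + 1 <= (K+2)^4 ->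
  9/2 * (K+2)^8 <= P ->
  1/2 * sqrt X <= 2 * (X + 1) / ((K+1)*(K+2))
                  - 3 * (X+1)^3 * (3/2 / P) / (((K+1)*(K+2)) * ((K+1)*(K+2))).
Proof.
  intros HK HX HU HP.
  set (k := (K+1)*(K+2)).
  assert (kp : 1 <= k) by (unfold k; nra).
  assert (X0 : 0 < X) by (assert (0 < (K+1)^4) by (apply pow_lt; lra); lra).
  assert (P0 : 0 < P) by (assert (0 < (K+2)^8) by (apply pow_lt; lra); lra).
  assert (E1 : (X+1)^2 <= (K+2)^8).
  { replace 8%nat with (4*2)%nat by reflexivity. rewrite pow_mult.
    apply pow_incr. split; lra. }
  assert (E : 3 * (X+1)^2 * (3/2/P) <= 1).
  { apply Rmult_le_reg_r with P; [lra|]. field_simplify; lra. }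
  assert (T : 3 * (X+1)^3 * (3/2 / P) / (k*k) <= (X+1)/k).
  { replace (3 * (X+1)^3 * (3/2 / P) / (k*k)) with ((3 * (X+1)^2 * (3/2/P)) * ((X+1)/(k*k))) by (field; lra).
    assert (0 <= (X+1)/(k*k)) by (apply Rmult_le_pos; [lra| left; apply Rinv_0_lt_compat; nra]).
    assert ((X+1)/(k*k) <= (X+1)/k).
    { apply Rmult_le_compat_l; [lra|]. apply Rinv_le_contravar; nra. }
    assert (0 <= 3 * (X + 1) ^ 2 * (3 / 2 / P)).
    { apply Rmult_le_pos; [apply Rmult_le_pos; [lra| apply pow_le; lra]|].
      unfold Rdiv; apply Rmult_le_pos; [lra| left; apply Rinv_0_lt_compat; lra]. }
    nra. }
  set (sX := sqrt X).
  assert (sq : sX * sX = X) by (apply sqrt_sqrt; lra).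
  assert (sp : 0 < sX) by (apply sqrt_lt_R0; lra).
  assert (Hs : (K+1)^2 <= sX).
  { unfold sX. rewrite <- (sqrt_square ((K+1)^2)) by (apply pow_le; lra).
    apply sqrt_le_1_alt. replace ((K+1)^2 * (K+1)^2) with ((K+1)^4) by ring. lra. }
  assert (kb : k <= 2 * sX) by (unfold k; nra).
  assert (1/2 * sX <= (X+1)/k).
  { apply Rmult_le_reg_r with k; [lra|]. replace ((X+1)/k*k) with (X+1) by (field; lra). nra. }
  unfold Rdiv in *. lra.
Qed.

Theorem proposition3p11 :
  exists c : R, 0 < c /\
  exists N : nat, forall n : nat, (N <= n)%nat ->
    c * sqrt (INR n) <= the_sum n.
Proof.
  exists (1/2). split; [lra|]. exists ((101*101)*(101*101))%nat. intros n Hn.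
  assert (Hs1 : (101*101 <= Nat.sqrt n)%nat) by (apply (proj1 (Nat.sqrt_le_square n (101*101))); exact Hn).
  assert (Hs : (101 <= Nat.sqrt (Nat.sqrt n))%nat) by (apply (proj1 (Nat.sqrt_le_square (Nat.sqrt n) 101)); exact Hs1).
  destruct (Nat.sqrt_spec n ltac:(lia)) as [Sa Sb].
  destruct (Nat.sqrt_spec (Nat.sqrt n) ltac:(lia)) as [Sc Sd].
  revert Hs Sa Sb Sc Sd. generalize (Nat.sqrt n) (Nat.sqrt (Nat.sqrt n)).
  intros r s Hs Sa Sb Sc Sd. clear Hs1.
  assert (Hlow : (s*s*(s*s) <= n)%nat) by nia.
  assert (Hup : (S n <= S s * S s * (S s * S s))%nat) by nia.
  destruct s as [|k]; [lia|]. clear Sa Sb Sc Sd.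
  assert (Hk : (100 <= k)%nat) by lia.
  assert (Hkn : (k < n)%nat) by nia.
  assert (RX : (INR k + 1)^4 <= INR n).
  { apply le_INR in Hlow. rewrite !mult_INR, S_INR in Hlow. simpl. lra. }
  assert (RU : INR n + 1 <= (INR k + 2)^4).
  { apply le_INR in Hup. rewrite !mult_INR, !S_INR in Hup. simpl. lra. }
  assert (RK : 100 <= INR k) by (apply (le_INR 100) in Hk; simpl in Hk; lra).
  assert (PB : 9/2 * (INR k + 2)^8 <= (3/2)^k).
  { pose proof (pow_bound (k - 100)) as H.
    replace (100 + (k - 100))%nat with k in H by lia.
    rewrite minus_INR in H by lia.
    replace (INR k - INR 100 + 102) with (INR k + 2) in H by (simpl; ring). exact H. }
  set (kap := (INR k + 1) * (INR k + 2)).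
  set (wmax := 3/2 / (3/2)^k).
  assert (Kp : 0 < kap) by (unfold kap; nra).
  assert (LOG : log4 (INR n) <= INR k).
  { unfold log4.
    assert (n0 : 0 < INR n) by (apply lt_0_INR; lia).
    assert (l4 : 0 < ln 4) by (rewrite <- ln_1; apply ln_increasing; lra).
    assert (n4 : INR n <= 4 ^ k).
    { assert ((INR k + 2)^4 <= (INR k + 2)^8) by (apply Rle_pow; [lra|lia]).
      assert ((3/2)^k <= 4^k) by (apply pow_incr; lra). lra. }
    assert (ln (INR n) <= ln (4 ^ k)).
    { destruct (Req_dec (INR n) (4^k)) as [E|E]; [rewrite E; lra|].
      left; apply ln_increasing; lra. }
    rewrite ln_pow in H by lra.
    apply Rmult_le_reg_r with (ln 4); [lra|].
    replace (ln (INR n) / ln 4 * ln 4) with (ln (INR n)) by (field; lra). lra. }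
  unfold the_sum, B_le. rewrite filter_flat_map, sumR_flat_map.
  assert (NN : forall k', In k' (seq 1 n) ->
     0 <= sumR (map (fun t => 1 - coef_S t n / coef_T n)
          (filter (fun t => if Rle_dec (log4 (INR n)) (INR (bsize t)) then true else false)
             (nth k' (trees_by_size n) [])))).
  { intros k' Hk'. apply in_seq in Hk'. apply sumR_nonneg_in. intros t Ht.
    apply filter_In in Ht as [Ht _]. rewrite tbs_prefix in Ht by lia.
    apply Bk_size in Ht. rewrite term_eq by lia. apply dd_nonneg. lia. }
  eapply Rle_trans; [|apply (sumR_ge_term _ _ k); [apply in_seq; lia| exact NN]].
  cbv beta.
  rewrite tbs_prefix by lia.
  rewrite filter_all.
  2:{ intros t Ht. apply Bk_size in Ht. rewrite Ht.
      destruct (Rle_dec (log4 (INR n)) (INR k)); [reflexivity| contradiction]. }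
  rewrite (sumR_ext_in _ (fun t => dd k (wt t) n)).
  2:{ intros t Ht. rewrite term_eq by lia. rewrite (Bk_size _ _ Ht). reflexivity. }
  eapply Rle_trans; [|apply (sumR_le_in (fun t => (2 * (INR n + 1) / kap - 3 * (INR n + 1)^3 * wmax / (kap * kap)) * wt t))].
  - rewrite sumR_scal, W_one, Rmult_1_r.
    unfold kap, wmax. apply final_arith; auto.
  - intros t Ht. pose proof (Bk_size _ _ Ht) as Hb.
    pose proof (wt_pos t) as Wp.
    pose proof (d_lower k (wt t) _ (good_dd k (wt t)) ltac:(lia) ltac:(lra) n Hkn) as DL.
    cbv zeta in DL. fold kap in DL.
    eapply Rle_trans; [|exact DL].
    assert (Wm : wt t <= wmax).
    { rewrite wt_eq. pose proof (hp_bound t) as HB. rewrite Hb in HB.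
      pose proof (hp_pos t). assert (hp1 : 1 <= INR (hookprod t)) by (apply (le_INR 1); lia).
      assert (pk : 0 < (3/2)^k) by (apply pow_lt; lra).
      unfold wmax. apply Rmult_le_reg_r with (INR (hookprod t) * (3/2)^k); [nra|].
      replace (/ INR (hookprod t) * (INR (hookprod t) * (3/2)^k)) with ((3/2)^k) by (field; lra).
      replace (3/2 / (3/2)^k * (INR (hookprod t) * (3/2)^k)) with (3/2 * INR (hookprod t)) by (field; lra).
      exact HB. }
    set (w := wt t) in *. set (X := INR n + 1) in *.
    assert (X0 : 0 < X) by (unfold X; pose proof (pos_INR n); lra).
    assert (0 <= X^3) by (apply pow_le; lra).
    assert (0 < kap * kap) by nra.
    unfold Rdiv.
    assert (0 < / (kap * kap)) by (apply Rinv_0_lt_compat; lra).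
    replace (w * / kap * (w * / kap)) with (w * w * / (kap * kap)) by (field; lra).
    assert (w * w <= wmax * w) by nra.
    assert (0 <= X^3 * / (kap*kap)) by (apply Rmult_le_pos; lra).
    assert (w*w*(X^3 * /(kap*kap)) <= wmax*w*(X^3*/(kap*kap))) by (apply Rmult_le_compat_r; lra).
    lra.
Qed.
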